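(* The set $\mathcal{S}$ of all signatures of continuous bounded variation paths is a linearly independent subset of $T((V))$; that is, any finitely many pairwise distinct elements of $\mathcal{S}$ are linearly independent.
   Context: $V$ is a finite-dimensional real vector space and $T((V))=\prod_{k\ge0}V^{\otimes k}$ is the space of formal tensor series. For a continuous bounded variation path $\gamma$ and $s<t$, $S(\gamma)_{s,t}=1+\sum_{k\ge1}\int_{s<u_1<\dots<u_k<t}d\gamma_{u_1}\otimes\cdots\otimes d\gamma_{u_k}\in T((V))$, and $\mathcal{S}=\{S(\gamma)_{s,t}:\gamma\text{ continuous of bounded variation},\ s<t\}$. *)

(* Defs.v *)
From HB Require Import structures.
From mathcomp Require Import all_boot all_order all_algebra.
From mathcomp Require Import all_classical all_reals all_analysis.
Set Implicit Arguments. Unset Strict Implicit. Unset Printing Implicit Defensive.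
Import Order.TTheory GRing.Theory Num.Theory.
Import numFieldNormedType.Exports.
Local Open Scope classical_set_scope.
Local Open Scope ring_scope.

(* V = R^d with standard basis e_0,...,e_{d-1}.  An element of
   T((V)) = prod_k V^{(x)k} is represented by its coefficients on the basis
   e_{i1} (x) ... (x) e_{ik} of V^{(x)k}, i.e. as a function from words
   (seq 'I_d, the empty word giving the degree-0 component) to R. *)
Definition tensor_series (R : realType) (d : nat) := seq 'I_d -> R.

Definition is_RS_integral (R : realType) (f g : R -> R) (a b I : R) : Prop :=
  forall e : R, 0 < e -> exists2 delta : R, 0 < delta &
    forall (n : nat) (x tau : nat -> R),
      x 0%N = a -> x n = b ->
      (forall j, (j < n)%N ->
         [/\ x j < x j.+1, x j.+1 - x j < delta & x j <= tau j <= x j.+1]) ->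
      `| \sum_(j < n) f (tau j) * (g (x j.+1) - g (x j)) - I | < e.

(* The Riemann--Stieltjes integral \int_a^b f dg (0 when it does not exist). *)
Definition RS_int (R : realType) (f g : R -> R) (a b : R) : R :=
  xget 0 [set I | is_RS_integral f g a b I].

(* gamma i : R -> R is the i-th coordinate of the path.
   sig_rev gamma s r t, for r the REVERSED word [i_k; ...; i_1], is the
   iterated integral  int_{s<u1<...<uk<t} d gamma^{i1}_{u1} ... d gamma^{ik}_{uk},
   computed recursively:  X^{w i}_{s,t} = int_s^t X^{w}_{s,u} d gamma^{i}_u. *)
Fixpoint sig_rev (R : realType) (d : nat) (gamma : 'I_d -> R -> R) (s : R)
    (r : seq 'I_d) (t : R) : R :=
  match r with
  | [::] => 1
  | i :: r' => RS_int (fun u => sig_rev gamma s r' u) (gamma i) s t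
  end.

Definition signature (R : realType) (d : nat) (gamma : 'I_d -> R -> R)
    (s t : R) : tensor_series R d :=
  fun w => sig_rev gamma s (rev w) t.

Definition cont_BV_path (R : realType) (d : nat) (gamma : 'I_d -> R -> R)
    (s t : R) : Prop :=
  forall i : 'I_d,
    {within `[s, t], continuous (gamma i)} /\ bounded_variation s t (gamma i).

Definition signatures (R : realType) (d : nat) : set (tensor_series R d) :=
  [set X | exists (gamma : 'I_d -> R -> R) (s t : R),
     [/\ s < t, cont_BV_path gamma s t & X = signature gamma s t]].

(* Main.v *)
Require Import Defs.
From HB Require Import structures.
From mathcomp Require Import all_boot all_order all_algebra.
From mathcomp Require Import all_classical all_reals all_analysis.
From mathcomp Require Import ring lra.
Import Order.TTheory GRing.Theory Num.Theory.
Local Open Scope classical_set_scope.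
Local Open Scope ring_scope.

Set Implicit Arguments. Unset Strict Implicit. Unset Printing Implicit Defensive.

Section RS.
Variable R : realType.
Implicit Types (f g h V : R -> R) (a b u v p q dl eps : R) (x tau : nat -> R).

Definition rss f g n x tau := \sum_(j < n) f (tau j) * (g (x j.+1) - g (x j)).

Definition tpart a b dl n x tau :=
  [/\ x 0%N = a, x n = b & forall j, (j < n)%N ->
     [/\ x j < x j.+1, x j.+1 - x j < dl & x j <= tau j <= x j.+1]].

Lemma is_RSP f g a b I : is_RS_integral f g a b I <->
  forall e, 0 < e -> exists2 dl, 0 < dl & forall n x tau,
    tpart a b dl n x tau -> `|rss f g n x tau - I| < e.
Proof.
split=> H e /H [dl dl0 Hd]; exists dl => // n x tau.
  by case=> *; apply: Hd.
by move=> *; apply: Hd; split.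
Qed.

Lemma tele (F : nat -> R) n : \sum_(j < n) (F j.+1 - F j) = F n - F 0%N.
Proof. by rewrite -(big_mkord xpredT (fun j => F j.+1 - F j)) telescope_sumr. Qed.

Lemma tpart_mono a b dl n x tau : tpart a b dl n x tau ->
  forall i j, (i <= j)%N -> (j <= n)%N -> x i <= x j.
Proof.
case=> _ _ H i j ij; elim: j ij => [|j IH].
  by rewrite leqn0 => /eqP ->.
rewrite leq_eqVlt => /orP [/eqP -> //| ij] jn.
have [h1 _ _] := H j jn.
by apply: le_trans (IH ij (ltnW jn)) (ltW h1).
Qed.

Lemma tpart_in a b dl n x tau : tpart a b dl n x tau ->
  forall j, (j <= n)%N -> a <= x j <= b.
Proof.
move=> P j jn; have [x0 xn _] := P.
rewrite -x0 -xn; apply/andP; split.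
  exact: (tpart_mono P (leq0n j) jn).
exact: (tpart_mono P jn (leqnn n)).
Qed.

Lemma tpart_tau a b dl n x tau : tpart a b dl n x tau ->
  forall j, (j < n)%N -> a <= tau j <= b.
Proof.
move=> P j jn; have [_ _ H] := P; have [_ _ /andP [t1 t2]] := H j jn.
have /andP [a1 _] := tpart_in P (ltnW jn).
have /andP [_ b2] := tpart_in P jn.
by rewrite (le_trans a1 t1) (le_trans t2 b2).
Qed.

Definition dom g V a b := forall u v, a <= u -> u <= v -> v <= b ->
  `|g v - g u| <= V v - V u.

Definition ov h u v p q :=
  h (Num.max (Num.max u p) (Num.min v q)) - h (Num.max u p).

Lemma ov_sym h u v p q : ov h u v p q = ov h p q u v.
Proof. by rewrite /ov (maxC u p) (minC v q). Qed.

Lemma ov_clamp h u v p q : u <= v -> p <= q ->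
  ov h u v p q = h (Num.min (Num.max q u) v) - h (Num.min (Num.max p u) v).
Proof.
move=> uv pq; rewrite /ov.
have [qu|uq] := ltP q u.
  have pu : p <= u by exact: ltW (le_lt_trans pq qu).
  have qv : q <= v by exact: ltW (lt_le_trans qu uv).
  rewrite (max_l pu) (min_r qv) (max_l (ltW qu)).
  by rewrite (max_r pu) (min_l uv) subrr.
have [vp|pv] := ltP v p.
  have uvp : u <= p by exact: ltW (le_lt_trans uv vp).
  have vq : v <= q by exact: ltW (lt_le_trans vp pq).
  rewrite (max_r uvp) (min_l vq) (max_l (ltW vp)) subrr.
  by rewrite (min_r vq) (max_l uvp) (min_r (ltW vp)) subrr.
rewrite [Num.min (Num.max p u) v]min_l; last by rewrite ge_max pv uv.
rewrite (maxC p u) (minC q v) max_r //.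
by rewrite le_min !ge_max uv uq pv pq.
Qed.

Lemma ov_sum h a b m y u v : y 0%N = a -> y m = b ->
  (forall k, (k < m)%N -> y k <= y k.+1) -> a <= u -> u <= v -> v <= b ->
  \sum_(k < m) ov h u v (y k) (y k.+1) = h v - h u.
Proof.
move=> y0 ym ymono au uv vb.
rewrite (eq_bigr (fun k : 'I_m => h (Num.min (Num.max (y k.+1) u) v) -
   h (Num.min (Num.max (y k) u) v))); last first.
  by move=> k _; rewrite ov_clamp // ymono.
rewrite (tele (fun k => h (Num.min (Num.max (y k) u) v))) ym y0.
rewrite (max_l (le_trans uv vb)) (min_r vb) (max_r au) (min_l uv) //.
Qed.

Lemma rss_cauchy f g V a b dl eps n x tau m y sg :
  dom g V a b -> 0 <= eps ->
  (forall u v, a <= u <= b -> a <= v <= b -> `|u - v| < dl + dl ->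
     `|f u - f v| <= eps) ->
  tpart a b dl n x tau -> tpart a b dl m y sg ->
  `|rss f g n x tau - rss f g m y sg| <= eps * (V b - V a).
Proof.
move=> dg e0 fuc P Q.
have [x0 xn Px] := P; have [y0 ym Qy] := Q.
have ymono k : (k < m)%N -> y k <= y k.+1 by move=> /Qy [/ltW].
have xmono j : (j < n)%N -> x j <= x j.+1 by move=> /Px [/ltW].
have E1 : rss f g n x tau = \sum_(j < n) \sum_(k < m)
    f (tau j) * ov g (x j) (x j.+1) (y k) (y k.+1).
  rewrite /rss; apply: eq_bigr => j _; rewrite -big_distrr /=; congr (_ * _).
  have /andP [a1 _] := tpart_in P (ltnW (ltn_ord j)).
  have /andP [_ b2] := tpart_in P (ltn_ord j).
  by rewrite (ov_sum g y0 ym ymono a1 (xmono _ (ltn_ord j)) b2).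
have E2 : rss f g m y sg = \sum_(j < n) \sum_(k < m)
    f (sg k) * ov g (x j) (x j.+1) (y k) (y k.+1).
  rewrite exchange_big /rss; apply: eq_bigr => k _; rewrite -big_distrr /=.
  congr (_ * _).
  have /andP [a1 _] := tpart_in Q (ltnW (ltn_ord k)).
  have /andP [_ b2] := tpart_in Q (ltn_ord k).
  rewrite -(ov_sum g x0 xn xmono a1 (ymono _ (ltn_ord k)) b2).
  by apply: eq_bigr => j _; rewrite ov_sym.
have E3 : V b - V a = \sum_(j < n) \sum_(k < m)
    ov V (x j) (x j.+1) (y k) (y k.+1).
  rewrite -xn -x0 -(tele (fun j => V (x j))); apply: eq_bigr => j _.
  have /andP [a1 _] := tpart_in P (ltnW (ltn_ord j)).
  have /andP [_ b2] := tpart_in P (ltn_ord j).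
  by rewrite (ov_sum V y0 ym ymono a1 (xmono _ (ltn_ord j)) b2).
rewrite E1 E2 -sumrB E3 mulr_sumr.
apply: (le_trans (ler_norm_sum _ _ _)); apply: ler_sum => j _.
rewrite -sumrB mulr_sumr.
apply: (le_trans (ler_norm_sum _ _ _)); apply: ler_sum => k _.
rewrite -mulrBl normrM /ov.
have [xj1 xj2 xj3] := Px j (ltn_ord j).
have [yk1 yk2 yk3] := Qy k (ltn_ord k).
have /andP [ax bx] := tpart_in P (ltnW (ltn_ord j)).
have /andP [ax' bx'] := tpart_in P (ltn_ord j).
have /andP [ay by'] := tpart_in Q (ltnW (ltn_ord k)).
have /andP [ay' by''] := tpart_in Q (ltn_ord k).
set L := Num.max (x j) (y k); set H := Num.min (x j.+1) (y k.+1).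
have [HL|LH] := ltP H L.
  by rewrite !subrr normr0 !mulr0.

have aL : a <= L by rewrite le_max ax.
have Hb : H <= b by rewrite ge_min bx'.
have gd := dg _ _ aL LH Hb.
apply: ler_pM => //.
move: LH; rewrite /L /H le_min !ge_max => /andP [/andP [h1 h2] /andP [h3 h4]].
move: xj3 yk3 => /andP [t1 t2] /andP [s1 s2].
apply: fuc.
- by rewrite (le_trans ax t1) (le_trans t2 bx').
- by rewrite (le_trans ay s1) (le_trans s2 by'').
rewrite ltr_norml; apply/andP; split; lra.
Qed.

Lemma unif_part a b dl : a < b -> 0 < dl ->
  exists n x, tpart a b dl n x x.
Proof.
move=> ab dl0.
set N := (Num.Def.trunc ((b - a) / dl)).+1.
have N0 : (0 < N%:R :> R) by rewrite ltr0n.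
have hN : (b - a) / dl < N%:R by apply: truncnS_gt.
set h := (b - a) / N%:R.
have h0 : 0 < h by rewrite divr_gt0 // subr_gt0.
have hdl : h < dl.
  rewrite /h ltr_pdivrMr // mulrC -ltr_pdivrMr //.
exists N, (fun j => a + j%:R * h); split => //=.
- by rewrite mul0r addr0.
- by rewrite /h mulrC divfK ?gt_eqF // addrC subrK.
move=> j _; rewrite -natr1 mulrDl mul1r; split.
- by rewrite addrA ltrDl.
- rewrite addrA; lra.
- by rewrite lexx addrA lerDl ltW.
Qed.

Definition UC f a b := forall e, 0 < e -> exists2 dl, 0 < dl &
  forall u v, a <= u <= b -> a <= v <= b -> `|u - v| < dl -> `|f u - f v| < e.

Definition upart a b N j : R := a + j%:R * ((b - a) / N.+1%:R).

Lemma upart_tpart a b dl N : a < b -> (b - a) / N.+1%:R < dl ->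
  tpart a b dl N.+1 (upart a b N) (upart a b N).
Proof.
move=> ab hdl.
have N0 : (0 < N.+1%:R :> R) by rewrite ltr0n.
set h := (b - a) / N.+1%:R.
have h0 : 0 < h by rewrite divr_gt0 // subr_gt0.
have hdl' : h < dl by [].
rewrite /upart -/h; split => //=.
- by rewrite mul0r addr0.
- by rewrite /h mulrC divfK ?gt_eqF // addrC subrK.
move=> j _; rewrite -natr1 mulrDl mul1r; split.
- by rewrite addrA ltrDl.
- rewrite addrA; lra.
- by rewrite lexx addrA lerDl ltW.
Qed.

Lemma upart_N a b dl : a < b -> 0 < dl ->
  exists N0, forall N, (N0 <= N)%N -> (b - a) / N.+1%:R < dl.
Proof.
move=> ab dl0; exists (Num.Def.trunc ((b - a) / dl)) => N hN.
have hN' : (b - a) / dl < N.+1%:R.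
  apply: (lt_le_trans (truncnS_gt _)); by rewrite ler_nat ltnS.
have N0 : (0 < N.+1%:R :> R) by rewrite ltr0n.
by rewrite ltr_pdivrMr // mulrC -ltr_pdivrMr.
Qed.

Lemma dom_ge g V a b : a <= b -> dom g V a b -> 0 <= V b - V a.
Proof. by move=> ab d; apply: le_trans (d a b (lexx a) ab (lexx b)). Qed.

Lemma dom_sub g V a b c e : a <= c -> e <= b -> dom g V a b -> dom g V c e.
Proof.
move=> ac eb d u v cu uv ve; apply: d => //.
- exact: le_trans ac cu.
- exact: le_trans ve eb.
Qed.

Lemma UC_sub f a b c e : a <= c -> e <= b -> UC f a b -> UC f c e.
Proof.
move=> ac eb H ep /H [dl dl0 Hd]; exists dl => // u v /andP [u1 u2] /andP [v1 v2].
apply: Hd; apply/andP; split.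
- exact: le_trans ac u1.
- exact: le_trans u2 eb.
- exact: le_trans ac v1.
- exact: le_trans v2 eb.
Qed.

Lemma rss_cauchy2 f g V a b : a < b -> dom g V a b -> UC f a b ->
  forall e, 0 < e -> exists2 dl, 0 < dl & forall n x tau m y sg,
    tpart a b dl n x tau -> tpart a b dl m y sg ->
    `|rss f g n x tau - rss f g m y sg| <= e.
Proof.
move=> ab dg fuc e e0.
have K0 := dom_ge (ltW ab) dg.
set K := V b - V a + 1.
have K1 : 0 < K by rewrite /K; lra.
have eK : 0 < e / K by rewrite divr_gt0.
have [d0 d00 Hd0] := fuc _ eK.
exists (d0 / 2); first by rewrite divr_gt0.
move=> n x tau m y sg P Q.
apply: le_trans (rss_cauchy (eps := e / K) dg (ltW eK) _ P Q) _.
  move=> u v hu hv huv; apply: ltW; apply: Hd0 => //.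
  by move: huv; rewrite -splitr.
rewrite -[leRHS](@divfK _ K) ?gt_eqF // [_ * K]mulrC.
rewrite (mulrC (e / K)) ler_pM2r //; rewrite /K; lra.
Qed.

Lemma rs_exists f g V a b : a < b -> dom g V a b -> UC f a b ->
  exists I, is_RS_integral f g a b I.
Proof.
move=> ab dg fuc.
have C := rss_cauchy2 ab dg fuc.
pose S N := rss f g N.+1 (upart a b N) (upart a b N).
have cS : cvg (S @ \oo).
  apply: cauchy_cvg; apply: cauchy_exP => e e0.
  have [dl dl0 Hd] := C (e / 2) (divr_gt0 e0 (ltr0Sn _ 1)).
  have [N0 HN0] := upart_N ab dl0.
  exists (S N0); exists N0 => // N hN /=.
  rewrite -ball_normE /ball_ /=.
  apply: le_lt_trans (Hd _ _ _ _ _ _ (upart_tpart ab (HN0 _ (leqnn _)))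
    (upart_tpart ab (HN0 _ hN))) _.
  by rewrite ltr_pdivrMr // ltr_pMr // ltr1n.
exists (lim (S @ \oo)); apply/is_RSP => e e0.
have [dl dl0 Hd] := C (e / 2) (divr_gt0 e0 (ltr0Sn _ 1)).
exists dl => // n x tau P.
have [N0 HN0] := upart_N ab dl0.
have /cvgrPdist_lt /(_ (e / 2) (divr_gt0 e0 (ltr0Sn _ 1))) [N1 _ HN1] := cS.
set N := maxn N0 N1.
have := HN1 N (leq_maxr _ _); rewrite /= => h1.
have h2 := Hd _ _ _ _ _ _ P (upart_tpart ab (HN0 N (leq_maxl _ _))).
rewrite -/(S N) in h2.
have -> : rss f g n x tau - lim (S @ \oo) =
  (rss f g n x tau - S N) - (lim (S @ \oo) - S N) by ring.
apply: le_lt_trans (ler_normB _ _) _.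
rewrite [e]splitr; apply: ler_ltD => //.
Qed.

End RS.

Section RS2.
Variable R : realType.
Implicit Types (f g h V : R -> R) (a b c u v p q dl eps : R) (x tau : nat -> R).

Lemma le0_forall (r : R) : (forall e, 0 < e -> r <= e) -> r <= 0.
Proof. by move=> H; apply/ler_addgt0Pr => e e0; rewrite add0r; apply: H. Qed.

Lemma RS_uniq f g a b I1 I2 : a < b -> is_RS_integral f g a b I1 ->
  is_RS_integral f g a b I2 -> I1 = I2.
Proof.
move=> ab /is_RSP H1 /is_RSP H2; apply/eqP; rewrite -subr_eq0 -normr_le0.
apply: le0_forall => e e0.
have e2 : 0 < e / 2 by rewrite divr_gt0.
have [d1 d10 Hd1] := H1 _ e2; have [d2 d20 Hd2] := H2 _ e2.
have dm : 0 < Num.min d1 d2 by rewrite lt_min d10 d20.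
have [n [x P]] := unif_part ab dm.
have P1 : tpart a b d1 n x x.
  case: P => p1 p2 p3; split => // j /p3 [q1 q2 q3]; split => //.
  by apply: lt_le_trans q2 _; rewrite ge_min lexx.
have P2 : tpart a b d2 n x x.
  case: P => p1 p2 p3; split => // j /p3 [q1 q2 q3]; split => //.
  by apply: lt_le_trans q2 _; rewrite ge_min lexx orbT.
have := Hd1 _ _ _ P1; have := Hd2 _ _ _ P2.
set S := rss f g n x x => h2 h1.
have -> : I1 - I2 = (S - I2) - (S - I1) by ring.
apply: ltW; apply: le_lt_trans (ler_normB _ _) _.
by rewrite [e]splitr; apply: ltrD.
Qed.

Lemma RS_intE f g a b I : a < b -> is_RS_integral f g a b I ->
  RS_int f g a b = I.
Proof.
move=> ab HI; rewrite /RS_int; case: xgetP => [J -> HJ|H].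
  exact: RS_uniq HJ HI.
by case: (H I).
Qed.

Lemma RS_int_xx f g a : RS_int f g a a = 0.
Proof.
have H0 : forall I, is_RS_integral f g a a I -> I = 0.
  move=> I /is_RSP H; apply/eqP; rewrite -normr_le0; apply: le0_forall => e e0.
  have [dl dl0 /(_ 0%N (fun _ => a) (fun _ => a))] := H e e0.
  rewrite /rss big_ord0 sub0r normrN => h; apply: ltW; apply: h.
  by split.
rewrite /RS_int; case: xgetP => [J -> HJ|H]; first exact: H0.
exfalso; apply: (H 0); apply/is_RSP => e e0; exists 1 => // n x tau P.
case: n P => [|n] P; first by rewrite /rss big_ord0 subrr normr0.
have [x0 xn Px] := P.
have [h1 _ _] := Px 0%N (ltn0Sn n).
have := tpart_mono P (ltn0Sn n) (leqnn _).
by rewrite xn; move: h1; rewrite x0 => h1 h2; move: (lt_le_trans h1 h2); rewrite ltxx.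
Qed.

Lemma rss_ext f1 f2 g a b dl n x tau : tpart a b dl n x tau ->
  (forall u, a <= u <= b -> f1 u = f2 u) -> rss f1 g n x tau = rss f2 g n x tau.
Proof.
move=> P H; apply: eq_bigr => j _; congr (_ * _); apply: H.
exact: tpart_tau P _ (ltn_ord j).
Qed.

Lemma is_RS_ext f1 f2 g a b I : (forall u, a <= u <= b -> f1 u = f2 u) ->
  is_RS_integral f1 g a b I -> is_RS_integral f2 g a b I.
Proof.
move=> H /is_RSP H1; apply/is_RSP => e /H1 [dl dl0 Hd]; exists dl => // n x tau P.
by rewrite -(rss_ext g P H); apply: Hd.
Qed.

Lemma is_RS_add f1 f2 g a b I1 I2 : is_RS_integral f1 g a b I1 ->
  is_RS_integral f2 g a b I2 ->
  is_RS_integral (fun u => f1 u + f2 u) g a b (I1 + I2).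
Proof.
move=> /is_RSP H1 /is_RSP H2; apply/is_RSP => e e0.
have e2 : 0 < e / 2 by rewrite divr_gt0.
have [d1 d10 Hd1] := H1 _ e2; have [d2 d20 Hd2] := H2 _ e2.
exists (Num.min d1 d2); first by rewrite lt_min d10 d20.
move=> n x tau P.
have P1 : tpart a b d1 n x tau.
  case: P => p1 p2 p3; split => // j /p3 [q1 q2 q3]; split => //.
  by apply: lt_le_trans q2 _; rewrite ge_min lexx.
have P2 : tpart a b d2 n x tau.
  case: P => p1 p2 p3; split => // j /p3 [q1 q2 q3]; split => //.
  by apply: lt_le_trans q2 _; rewrite ge_min lexx orbT.
have -> : rss (fun u => f1 u + f2 u) g n x tau = rss f1 g n x tau + rss f2 g n x tau.
  by rewrite /rss -big_split /=; apply: eq_bigr => j _; rewrite mulrDl.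
have -> : rss f1 g n x tau + rss f2 g n x tau - (I1 + I2) =
  (rss f1 g n x tau - I1) + (rss f2 g n x tau - I2) by ring.
apply: le_lt_trans (ler_normD _ _) _.
by rewrite [e]splitr; apply: ltrD; [apply: Hd1|apply: Hd2].
Qed.

Lemma rss_const c0 g a b dl n x tau : tpart a b dl n x tau ->
  rss (fun _ => c0) g n x tau = c0 * (g b - g a).
Proof.
case=> x0 xn _; rewrite /rss -big_distrr /=.
by rewrite (tele (fun j => g (x j))) xn x0.
Qed.

Lemma is_RS_const c0 g a b : is_RS_integral (fun _ => c0) g a b (c0 * (g b - g a)).
Proof.
apply/is_RSP => e e0; exists 1 => // n x tau P.
by rewrite (rss_const _ _ P) subrr normr0.
Qed.

Lemma is_RS_sum (T : Type) (l : seq T) (F : T -> R -> R) (Is : T -> R) g a b :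
  (forall w, is_RS_integral (F w) g a b (Is w)) ->
  is_RS_integral (fun u => \sum_(w <- l) F w u) g a b (\sum_(w <- l) Is w).
Proof.
move=> H; elim: l => [|w l IH].
  rewrite big_nil; apply: (is_RS_ext (f1 := fun _ => 0)).
    by move=> u _; rewrite big_nil.
  by have := is_RS_const 0 g a b; rewrite mul0r.
rewrite big_cons; apply: (is_RS_ext (f1 := fun u => F w u + \sum_(w <- l) F w u)).
  by move=> u _; rewrite big_cons.
exact: is_RS_add.
Qed.

Lemma rss_bound f g V a b M dl n x tau : dom g V a b ->
  (forall u, a <= u <= b -> `|f u| <= M) -> tpart a b dl n x tau ->
  `|rss f g n x tau| <= M * (V b - V a).
Proof.
move=> dg fM P; have [x0 xn Px] := P.
rewrite -xn -x0 -(tele (fun j => V (x j))) mulr_sumr.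
apply: le_trans (ler_norm_sum _ _ _) _; apply: ler_sum => j _.
have [h1 _ _] := Px j (ltn_ord j).
have /andP [a1 _] := tpart_in P (ltnW (ltn_ord j)).
have /andP [_ b2] := tpart_in P (ltn_ord j).
rewrite normrM; apply: ler_pM => //.
- exact: fM (tpart_tau P (ltn_ord j)).
- exact: dg a1 (ltW h1) b2.
Qed.

Lemma RS_bound f g V a b M I : a < b -> dom g V a b ->
  (forall u, a <= u <= b -> `|f u| <= M) -> is_RS_integral f g a b I ->
  `|I| <= M * (V b - V a).
Proof.
move=> ab dg fM /is_RSP H; apply/ler_addgt0Pr => e e0.
have [dl dl0 Hd] := H e e0.
have [n [x P]] := unif_part ab dl0.
have h1 := Hd _ _ _ P; have h2 := rss_bound dg fM P.
have -> : I = rss f g n x x - (rss f g n x x - I) by ring.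
apply: le_trans (ler_normB _ _) _; apply: lerD => //; exact: ltW.
Qed.

Definition concat_x n x y j : R := if (j <= n)%N then x j else y (j - n)%N.
Definition concat_t n x y j : R := if (j < n)%N then x j else y (j - n)%N.

Lemma concat_xl n x y j : (j <= n)%N -> concat_x n x y j = x j.
Proof. by rewrite /concat_x => ->. Qed.

Lemma concat_xr n x y k : x n = y 0%N -> concat_x n x y (n + k) = y k.
Proof.
rewrite /concat_x => e; case: k => [|k]; first by rewrite addn0 leqnn e.
have -> : (n + k.+1 <= n)%N = false by apply: negbTE; rewrite -ltnNge addnS ltnS leq_addr.
by rewrite addKn.
Qed.

Lemma concat_tl n x y j : (j < n)%N -> concat_t n x y j = x j.
Proof. by rewrite /concat_t => ->. Qed.

Lemma concat_tr n x y k : concat_t n x y (n + k) = y k.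
Proof.
rewrite /concat_t.
have -> : (n + k < n)%N = false by apply: negbTE; rewrite -leqNgt leq_addr.
by rewrite addKn.
Qed.

Lemma concat_tpart f g a b c dl n x tau m y sg : tpart a b dl n x tau ->
  tpart b c dl m y sg ->
  tpart a c dl (n + m) (concat_x n x y) (concat_t n tau sg)
  /\ rss f g (n + m) (concat_x n x y) (concat_t n tau sg) =
     rss f g n x tau + rss f g m y sg.
Proof.
move=> P Q; have [x0 xn Px] := P; have [y0 ym Qy] := Q.
have xy : x n = y 0%N by rewrite xn y0.
split.
  split.
  - by rewrite concat_xl.
  - by rewrite concat_xr.
  move=> j jnm; have [jn|nj] := ltnP j n.
    by rewrite !concat_xl // ?concat_tl //; [apply: Px | apply: ltnW].
  have -> : j = (n + (j - n))%N by rewrite subnKC.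
  have km : (j - n < m)%N by rewrite ltn_subLR.
  by rewrite -addnS !concat_xr // concat_tr; apply: Qy.
rewrite /rss big_split_ord /=; congr (_ + _).
  apply: eq_bigr => i _; rewrite concat_tl // !concat_xl //; exact: ltnW.
apply: eq_bigr => i _; by rewrite concat_tr -addnS !concat_xr.
Qed.

Lemma RS_additive f g a b c I1 I2 I3 : a < b -> b < c ->
  is_RS_integral f g a b I1 -> is_RS_integral f g b c I2 ->
  is_RS_integral f g a c I3 -> I3 = I1 + I2.
Proof.
move=> ab bc /is_RSP H1 /is_RSP H2 /is_RSP H3.
apply/eqP; rewrite -subr_eq0 -normr_le0; apply: le0_forall => e e0.
have e3 : 0 < e / 3 by rewrite divr_gt0.
have [d1 d10 Hd1] := H1 _ e3; have [d2 d20 Hd2] := H2 _ e3.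
have [d3 d30 Hd3] := H3 _ e3.
set d := Num.min d1 (Num.min d2 d3).
have d0 : 0 < d by rewrite !lt_min d10 d20 d30.
have [n [x P]] := unif_part ab d0.
have [m [y Q]] := unif_part bc d0.
have [PQ E] := concat_tpart f g P Q.
have W (dd : R) k z t a' b' : d <= dd -> tpart a' b' d k z t -> tpart a' b' dd k z t.
  move=> le [p1 p2 p3]; split => // j /p3 [q1 q2 q3]; split => //.
  exact: lt_le_trans q2 le.
have dd1 : d <= d1 by rewrite /d ge_min lexx.
have dd2 : d <= d2 by rewrite /d !ge_min lexx orbT.
have dd3 : d <= d3 by rewrite /d !ge_min lexx !orbT.
have h1 := Hd1 _ _ _ (W d1 _ _ _ _ _ dd1 P).
have h2 := Hd2 _ _ _ (W d2 _ _ _ _ _ dd2 Q).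
have h3 := Hd3 _ _ _ (W d3 _ _ _ _ _ dd3 PQ).
rewrite E in h3.
set S1 := rss f g n x x in h1 h3; set S2 := rss f g m y y in h2 h3.
have -> : I3 - (I1 + I2) = (S1 - I1) + (S2 - I2) - (S1 + S2 - I3) by ring.
apply: ltW; apply: le_lt_trans (ler_normB _ _) _.
have -> : e = e / 3 + e / 3 + e / 3 by field.
apply: ltrD => //; apply: le_lt_trans (ler_normD _ _) _; exact: ltrD.
Qed.

End RS2.

Section RS3.
Variable R : realType.
Implicit Types (f g h al be : R -> R) (a b c u v p q dl eps : R) (x tau : nat -> R).
Variables (s T : R) (V : R -> R).
Hypothesis sT : s < T.
Hypothesis UCV : UC V s T.

Definition bnd f M := forall u, s <= u <= T -> `|f u| <= M.

Lemma int_is f al u : dom al V s T -> UC f s T -> s < u -> u <= T ->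
  is_RS_integral f al s u (RS_int f al s u).
Proof.
move=> da uf su uT.
have [I HI] := rs_exists su (dom_sub (lexx s) uT da) (UC_sub (lexx s) uT uf).
by rewrite (RS_intE su HI).
Qed.

Lemma int_diff f al u v : dom al V s T -> UC f s T -> s <= u -> u < v -> v <= T ->
  is_RS_integral f al u v (RS_int f al s v - RS_int f al s u).
Proof.
move=> da uf su uv vT.
have [I HI] := rs_exists uv (dom_sub su vT da) (UC_sub su vT uf).
have [es|su'] := eqVneq s u.
  by rewrite -es RS_int_xx subr0; rewrite -es in HI uv; rewrite (RS_intE uv HI).
have su2 : s < u by rewrite lt_neqAle su' su.
have H1 := int_is da uf su2 (ltW (lt_le_trans uv vT)).
have H3 := int_is da uf (lt_trans su2 uv) vT.
rewrite (RS_additive su2 uv H1 HI H3).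
by rewrite addrAC subrr add0r.
Qed.

Lemma int_lip f al M u v : dom al V s T -> UC f s T -> bnd f M ->
  s <= u -> u <= v -> v <= T ->
  `|RS_int f al s v - RS_int f al s u| <= M * (V v - V u).
Proof.
move=> da uf fM su uv vT.
have [<-|uv'] := eqVneq u v; first by rewrite !subrr normr0 mulr0.
have uv2 : u < v by rewrite lt_neqAle uv' uv.
apply: RS_bound uv2 (dom_sub su vT da) _ (int_diff da uf su uv2 vT).
move=> w /andP [w1 w2]; apply: fM; apply/andP; split.
- exact: le_trans su w1.
- exact: le_trans w2 vT.
Qed.

Lemma bnd_ge0 f M : bnd f M -> 0 <= M.
Proof. move=> H; apply: le_trans (H s _); by rewrite ?normr_ge0 // lexx ltW. Qed.

Lemma int_bnd f al M : dom al V s T -> UC f s T -> bnd f M ->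
  bnd (fun u => RS_int f al s u) (M * (V T - V s)).
Proof.
move=> da uf fM u /andP [su uT].
have := int_lip da uf fM (lexx s) su uT; rewrite RS_int_xx subr0 => h.
apply: le_trans h _; apply: ler_wpM2l; first exact: bnd_ge0 fM.
have h2 := da u T su uT (lexx T); have h3 := normr_ge0 (al T - al u); lra.
Qed.

Lemma int_UC f al M : dom al V s T -> UC f s T -> bnd f M ->
  UC (fun u => RS_int f al s u) s T.
Proof.
move=> da uf fM e e0.
have M0 := bnd_ge0 fM.
have eM : 0 < e / (M + 1) by rewrite divr_gt0 // ltr_wpDl.
have [dl dl0 Hd] := UCV eM.
exists dl => // u v hu hv huv.
suff key : forall u v, s <= u <= T -> s <= v <= T -> `|u - v| < dl -> u <= v ->
    `|RS_int f al s u - RS_int f al s v| < e.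
  have [uv|vu] := leP u v; first exact: key.
  rewrite distrC; apply: key => //; first by rewrite distrC.
  exact: ltW.
move=> u1 v1 /andP [su uT] /andP [sv vT] duv uv.
rewrite distrC; apply: le_lt_trans (int_lip da uf fM su uv vT) _.
have hV : `|V u1 - V v1| < e / (M + 1).
  by apply: Hd => //; apply/andP; split.
set k := e / (M + 1) in eM hV *.
have hk : k * (M + 1) = e by rewrite /k divfK // gt_eqF // ltr_wpDl.
have h1 : M * (V v1 - V u1) <= M * k.
  apply: ler_wpM2l => //; apply: ltW; apply: le_lt_trans hV.
  by rewrite distrC ler_norm.
apply: le_lt_trans h1 _; rewrite -hk; nra.
Qed.

Lemma int_est f al u v eps : dom al V s T -> UC f s T ->
  s <= u -> u < v -> v <= T ->
  (forall w, u <= w <= v -> `|f w - f u| <= eps) ->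
  `|(RS_int f al s v - RS_int f al s u) - f u * (al v - al u)| <= eps * (V v - V u).
Proof.
move=> da uf su uv vT H.
have := is_RS_add (int_diff da uf su uv vT) (is_RS_const (- f u) al u v).
move=> /(RS_bound uv (dom_sub su vT da) H); by rewrite mulNr.
Qed.

Lemma term_bound f g al be Mf Mg u v eta :
  dom al V s T -> dom be V s T -> UC f s T -> UC g s T -> bnd f Mf -> bnd g Mg ->
  s <= u -> u < v -> v <= T ->
  (forall w, u <= w <= v -> `|f w - f u| <= eta) ->
  (forall w, u <= w <= v -> `|g w - g u| <= eta) ->
  `|RS_int f al s v - RS_int f al s u| <= eta ->
  let F := RS_int f al s in let G := RS_int g be s in
  `|(F v * G v - F u * G u) -
     (F u * g u * (be v - be u) + G u * f u * (al v - al u))|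
  <= eta * (Mf * (V T - V s) + Mg + Mg * (V T - V s)) * (V v - V u).
Proof.
move=> da db uf ug fM gM su uv vT hf hg hF.
have FM := int_bnd da uf fM; have GM := int_bnd db ug gM.
rewrite /=.
set F := RS_int f al s in FM hF *; set G := RS_int g be s in GM *.
have uT : s <= u <= T by rewrite su (le_trans (ltW uv) vT).
have vT' : s <= v <= T by rewrite vT (le_trans su (ltW uv)).
have e1 := int_est da uf su uv vT hf.
have e2 := int_est db ug su uv vT hg.
set dF := F v - F u in e1 hF *; set dG := G v - G u in e2 *.
have -> : F v * G v - F u * G u - (F u * g u * (be v - be u) + G u * f u * (al v - al u)) =
  F v * (dG - g u * (be v - be u)) + dF * g u * (be v - be u) +
  G u * (dF - f u * (al v - al u)) by rewrite /dF /dG; ring.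
have eta0 : 0 <= eta by apply: le_trans (normr_ge0 _) (hf u _); rewrite lexx ltW.
have dV0 : 0 <= V v - V u by apply: dom_ge (ltW uv) (dom_sub su vT da).
have b1 : `|F v * (dG - g u * (be v - be u))| <= Mf * (V T - V s) * (eta * (V v - V u)).
  by rewrite normrM; apply: ler_pM => //; apply: FM.
have b2 : `|dF * g u * (be v - be u)| <= eta * Mg * (V v - V u).
  rewrite !normrM; apply: ler_pM; rewrite ?mulr_ge0 //.
    by apply: ler_pM => //; apply: gM.
  exact: db su (ltW uv) vT.
have b3 : `|G u * (dF - f u * (al v - al u))| <= Mg * (V T - V s) * (eta * (V v - V u)).
  by rewrite normrM; apply: ler_pM => //; apply: GM.
have n1 := ler_normD (F v * (dG - g u * (be v - be u)) + dF * g u * (be v - be u))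
   (G u * (dF - f u * (al v - al u))).
have n2 := ler_normD (F v * (dG - g u * (be v - be u))) (dF * g u * (be v - be u)).
apply: le_trans n1 _.
have -> : eta * (Mf * (V T - V s) + Mg + Mg * (V T - V s)) * (V v - V u) =
  Mf * (V T - V s) * (eta * (V v - V u)) + eta * Mg * (V v - V u) +
  Mg * (V T - V s) * (eta * (V v - V u)) by ring.
lra.
Qed.

Lemma tpart_W a b dl dl' n x tau : dl <= dl' -> tpart a b dl n x tau ->
  tpart a b dl' n x tau.
Proof.
move=> le [p1 p2 p3]; split => // j /p3 [q1 q2 q3]; split => //.
exact: lt_le_trans q2 le.
Qed.

Lemma prod_rule f g al be Mf Mg t A B :
  dom al V s T -> dom be V s T -> UC f s T -> UC g s T -> bnd f Mf -> bnd g Mg ->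
  s < t -> t <= T ->
  is_RS_integral (fun u => RS_int f al s u * g u) be s t A ->
  is_RS_integral (fun u => RS_int g be s u * f u) al s t B ->
  RS_int f al s t * RS_int g be s t = A + B.
Proof.
move=> da db uf ug fM gM st tT /is_RSP HA /is_RSP HB.
have Mf0 := bnd_ge0 fM; have Mg0 := bnd_ge0 gM.
have VT0 : 0 <= V T - V s by apply: dom_ge (ltW sT) da.
have Vt0 : 0 <= V t - V s by apply: dom_ge (ltW st) (dom_sub (lexx s) tT da).
set K := Mf * (V T - V s) + Mg + Mg * (V T - V s).
have K0 : 0 <= K by rewrite /K; apply: addr_ge0; [apply: addr_ge0|]; rewrite ?mulr_ge0.
set DV := V t - V s in Vt0.
set F := RS_int f al s; set G := RS_int g be s.
apply/eqP; rewrite -subr_eq0 -normr_le0.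
suff H : forall eta, 0 < eta -> `|F t * G t - (A + B)| <= eta * (K * DV + 2).
  apply: le0_forall => e e0.
  have KD : 0 < K * DV + 2 by apply: ltr_wpDl; rewrite ?mulr_ge0.
  have := H (e / (K * DV + 2)) (divr_gt0 e0 KD).
  by rewrite divfK // gt_eqF.
move=> eta eta0.
have [d1 d10 H1] := HA eta eta0; have [d2 d20 H2] := HB eta eta0.
have [d3 d30 H3] := uf eta eta0; have [d4 d40 H4] := ug eta eta0.
have [d5 d50 H5] := int_UC da uf fM eta0.
have [d6 d60 H6] := int_UC db ug gM eta0.
set d := Num.min d1 (Num.min d2 (Num.min d3 (Num.min d4 (Num.min d5 d6)))).
have d0 : 0 < d by rewrite /d !lt_min d10 d20 d30 d40 d50 d60.
have dd1 : d <= d1 by rewrite /d !ge_min lexx.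
have dd2 : d <= d2 by rewrite /d !ge_min lexx !orbT.
have dd3 : d <= d3 by rewrite /d !ge_min lexx !orbT.
have dd4 : d <= d4 by rewrite /d !ge_min lexx !orbT.
have dd5 : d <= d5 by rewrite /d !ge_min lexx !orbT.
have dd6 : d <= d6 by rewrite /d !ge_min lexx !orbT.
have [n [x P]] := unif_part st d0.
have hA := H1 _ _ _ (tpart_W dd1 P); have hB := H2 _ _ _ (tpart_W dd2 P).
have [x0 xn Px] := P.
have -> : F t * G t = \sum_(j < n) (F (x j.+1) * G (x j.+1) - F (x j) * G (x j)).
  by rewrite (tele (fun j => F (x j) * G (x j))) xn x0 /F RS_int_xx mul0r subr0.
set rA := rss _ be n x x in hA; set rB := rss _ al n x x in hB.
have -> : \sum_(j < n) (F (x j.+1) * G (x j.+1) - F (x j) * G (x j)) - (A + B) =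
  \sum_(j < n) ((F (x j.+1) * G (x j.+1) - F (x j) * G (x j)) -
    (F (x j) * g (x j) * (be (x j.+1) - be (x j)) +
     G (x j) * f (x j) * (al (x j.+1) - al (x j))))
  + (rA - A) + (rB - B).
  rewrite [X in _ = X + _ + _]sumrB [X in _ = _ - X + _ + _]big_split /=.
  rewrite /rA /rB /rss /F /G; ring.
have hS : `|\sum_(j < n) ((F (x j.+1) * G (x j.+1) - F (x j) * G (x j)) -
    (F (x j) * g (x j) * (be (x j.+1) - be (x j)) +
     G (x j) * f (x j) * (al (x j.+1) - al (x j))))| <= eta * K * DV.
  rewrite /DV -xn -x0 -(tele (fun j => V (x j))) mulr_sumr.
  apply: le_trans (ler_norm_sum _ _ _) _; apply: ler_sum => j _.
  have [q1 q2 _] := Px j (ltn_ord j).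
  have /andP [sx _] := tpart_in P (ltnW (ltn_ord j)).
  have /andP [_ xt] := tpart_in P (ltn_ord j).
  have xT : x j.+1 <= T := le_trans xt tT.
  have xjT : s <= x j <= T by rewrite sx (le_trans (ltW q1) xT).
  have xj1T : s <= x j.+1 <= T by rewrite xT (le_trans sx (ltW q1)).
  have close : forall w, x j <= w <= x j.+1 -> `|w - x j| < d.
    move=> w /andP [w1 w2]; rewrite ger0_norm ?subr_ge0 //.
    by apply: le_lt_trans q2; rewrite lerB.
  have wT : forall w, x j <= w <= x j.+1 -> s <= w <= T.
    move=> w /andP [w1 w2]; by rewrite (le_trans sx w1) (le_trans w2 xT).
  apply: (term_bound da db uf ug fM gM sx q1 xT).
  - move=> w hw; apply: ltW; apply: H3 (wT _ hw) xjT _.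
    exact: lt_le_trans (close _ hw) dd3.
  - move=> w hw; apply: ltW; apply: H4 (wT _ hw) xjT _.
    exact: lt_le_trans (close _ hw) dd4.
  - apply: ltW; apply: H5 xj1T xjT _.
    by apply: lt_le_trans dd5; rewrite ger0_norm ?subr_ge0 ?(ltW q1).
apply: le_trans (ler_normD _ _) _; apply: le_trans (lerD (ler_normD _ _) (lexx _)) _.
have -> : eta * (K * DV + 2) = eta * K * DV + eta + eta by ring.
apply: lerD; first apply: lerD; [exact: hS | exact: ltW hA | exact: ltW hB].
Qed.

End RS3.

Section RS4.
Variable R : realType.
Implicit Types (f g h al be : R -> R) (a b c u v p q dl eps : R).

Lemma tv_dom f s t : bounded_variation s t f ->
  dom f (fun u => fine (total_variation s u f)) s t.
Proof.
move=> bv u v su uv vt.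
have ut := le_trans uv vt.
have bsv : bounded_variation s v f := bounded_variationl (le_trans su uv) vt bv.
have bsu : bounded_variation s u f := bounded_variationl su ut bv.
have buv : bounded_variation u v f := bounded_variationr su uv bsv.
have fsu : total_variation s u f \is a fin_num by apply/bounded_variationP.
have fuv : total_variation u v f \is a fin_num by apply/bounded_variationP.
rewrite (total_variationD f su uv) fineD // addrAC subrr add0r.
have := total_variation_ge f uv; rewrite -(fineK fuv) lee_fin.
by rewrite fineK.
Qed.

Lemma UC_ext f1 f2 a b : (forall u, f1 u = f2 u) -> UC f1 a b -> UC f2 a b.
Proof. by move=> /funext ->. Qed.

Lemma UC_add f g a b : UC f a b -> UC g a b -> UC (fun u => f u + g u) a b.
Proof.
move=> uf ug e e0.
have e2 : 0 < e / 2 by rewrite divr_gt0.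
have [d1 d10 H1] := uf _ e2; have [d2 d20 H2] := ug _ e2.
exists (Num.min d1 d2); first by rewrite lt_min d10 d20.
move=> u v hu hv huv.
have -> : f u + g u - (f v + g v) = (f u - f v) + (g u - g v) by ring.
apply: le_lt_trans (ler_normD _ _) _; rewrite [e]splitr; apply: ltrD.
- by apply: H1 => //; apply: lt_le_trans huv _; rewrite ge_min lexx.
- by apply: H2 => //; apply: lt_le_trans huv _; rewrite ge_min lexx orbT.
Qed.

Lemma UC_const c0 a b : UC (fun _ => c0) a b.
Proof. by move=> e e0; exists 1 => // *; rewrite subrr normr0. Qed.

Lemma UC_sum (I : Type) (l : seq I) (F : I -> R -> R) a b :
  (forall i, UC (F i) a b) -> UC (fun u => \sum_(i <- l) F i u) a b.
Proof.
move=> H; elim: l => [|i l IH].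
  by apply: UC_ext (UC_const 0 a b) => u; rewrite big_nil.
apply: UC_ext (UC_add (H i) IH) => u; by rewrite big_cons.
Qed.

End RS4.

Fixpoint rsh (I : Type) (r q : seq I) : seq (seq I) :=
  match r with
  | [::] => [:: q]
  | a :: r' =>
    let fix aux q :=
      match q with
      | [::] => [:: r]
      | b :: q' => map (cons a) (rsh r' q) ++ map (cons b) (aux q')
      end in aux q
  end.

Lemma rsh_nil_r (I : Type) (r : seq I) : rsh r [::] = [:: r].
Proof. by case: r. Qed.

Lemma rsh_cons (I : Type) (a b : I) r q :
  rsh (a :: r) (b :: q) = map (cons a) (rsh r (b :: q)) ++ map (cons b) (rsh (a :: r) q).
Proof. by []. Qed.

Section Sig.
Variables (R : realType) (d : nat) (gamma : 'I_d -> R -> R) (s T : R) (V : R -> R).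
Hypothesis sT : s < T.
Hypothesis UCV : UC V s T.
Hypothesis dg : forall i, dom (gamma i) V s T.

Let Y r := sig_rev gamma s r.

Lemma Y_nice r : UC (Y r) s T /\ exists M, bnd s T (Y r) M.
Proof.
elim: r => [|i r [uc [M bM]]].
  split; first exact: UC_const.
  by exists 1 => u _; rewrite /Y /= normr1.
split; first exact: (int_UC sT UCV (dg i) uc bM).
by exists (M * (V T - V s)); exact: (int_bnd sT (dg i) uc bM).
Qed.

Lemma Y_int r i t : s < t -> t <= T ->
  is_RS_integral (Y r) (gamma i) s t (Y (i :: r) t).
Proof.
move=> st tT; have [uc _] := Y_nice r.
exact: (int_is (dg i) uc st tT).
Qed.

Lemma Y_s r i : Y (i :: r) s = 0.
Proof. exact: RS_int_xx. Qed.

Lemma shuffle_id r q t : s <= t -> t <= T ->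
  Y r t * Y q t = \sum_(w <- rsh r q) Y w t.
Proof.
elim: r q t => [|a r IHr] q t st tT.
  by rewrite /= big_seq1 mul1r.
elim: q t st tT => [|b q IHq] t st tT.
  by rewrite rsh_nil_r big_seq1 /= mulr1.
rewrite rsh_cons big_cat !big_map /=.
have [es|st'] := eqVneq s t.
  rewrite -es !Y_s mul0r big1 ?add0r; last by move=> w _; rewrite Y_s.
  by rewrite big1 // => w _; rewrite Y_s.
have st2 : s < t by rewrite lt_neqAle st' st.
have [ucr [Mr bMr]] := Y_nice r.
have [ucq [Mq bMq]] := Y_nice q.
have HA : is_RS_integral (fun u => RS_int (Y r) (gamma a) s u * Y q u) (gamma b) s t
    (\sum_(w <- rsh (a :: r) q) Y (b :: w) t).
  apply: (is_RS_ext (f1 := fun u => \sum_(w <- rsh (a :: r) q) Y w u)).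
    move=> u /andP [su ut]; rewrite -IHq //; exact: le_trans ut tT.
  by apply: is_RS_sum => w; apply: Y_int.
have HB : is_RS_integral (fun u => RS_int (Y q) (gamma b) s u * Y r u) (gamma a) s t
    (\sum_(w <- rsh r (b :: q)) Y (a :: w) t).
  apply: (is_RS_ext (f1 := fun u => \sum_(w <- rsh r (b :: q)) Y w u)).
    move=> u /andP [su ut]; rewrite mulrC -IHr //; exact: le_trans ut tT.
  by apply: is_RS_sum => w; apply: Y_int.
have := prod_rule sT UCV (dg a) (dg b) ucr ucq bMr bMq st2 tT HA HB.
by rewrite addrC.
Qed.

End Sig.

Section Ded.
Variable R : realType.
Variable W : Type.
Variable sh : W -> W -> seq W.
Variable e : W.

Definition is_char (chi : W -> R) :=
  chi e = 1 /\ forall u v, chi u * chi v = \sum_(w <- sh u v) chi w.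

Lemma dedekind n (chi : 'I_n -> W -> R) (c : 'I_n -> R) :
  injective chi -> (forall j, is_char (chi j)) ->
  (forall w, \sum_(j < n) c j * chi j w = 0) -> forall j, c j = 0.
Proof.
elim: n chi c => [|n IH] chi c chi_inj chiC rel; first by case.
pose m : 'I_n.+1 := ord_max.
pose wd (i : 'I_n) : 'I_n.+1 := widen_ord (leqnSn n) i.
have wd_inj : injective wd.
  by move=> i1 i2 /(congr1 val) /= h; apply: val_inj.
have ck : forall k : 'I_n, c (wd k) = 0.
  move=> k.
  have [u hu] : exists u, chi (wd k) u != chi m u.
    apply: contrapT => H.
    have : chi (wd k) = chi m.
      apply: funext => u; apply/eqP; apply: contrapT => /negP ne.
      by apply: H; exists u.
    move/chi_inj/(congr1 val) => /= hk.
    by move: (ltn_ord k); rewrite hk ltnn.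
  pose c' (i : 'I_n) := c (wd i) * (chi (wd i) u - chi m u).
  have rel' : forall w, \sum_(i < n) c' i * chi (wd i) w = 0.
    move=> w.
    have h1 : \sum_(j < n.+1) c j * (chi j u - chi m u) * chi j w = 0.
      under eq_bigr => j _ do rewrite mulrBr mulrBl.
      rewrite sumrB.
      have -> : \sum_(j < n.+1) c j * chi j u * chi j w = 0.
        under eq_bigr => j _ do rewrite -mulrA (proj2 (chiC j)) big_distrr.
        rewrite exchange_big /=.
        by rewrite big1 // => w' _; rewrite rel.
      rewrite (eq_bigr (fun j => chi m u * (c j * chi j w))); last first.
        by move=> j _; ring.
      by rewrite -big_distrr /= rel mulr0 subrr.
    rewrite big_ord_recr /= subrr mulr0 mul0r addr0 in h1.
    rewrite -[RHS]h1; apply: eq_bigr => i _; by rewrite /c'.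
  have := IH (fun i => chi (wd i)) c'.
  have inj' : injective (fun i => chi (wd i)) by move=> i1 i2 /chi_inj /wd_inj.
  move=> /(_ inj' (fun i => chiC (wd i)) rel' k); rewrite /c'.
  by move/eqP; rewrite mulf_eq0 subr_eq0 (negbTE hu) orbF => /eqP.
have cm : c m = 0.
  have := rel e; rewrite big_ord_recr /=.
  rewrite big1 ?add0r; last by move=> i _; rewrite ck mul0r.
  by rewrite (proj1 (chiC _)) mulr1.
move=> j; case: (unliftP m j) => [k ->|->] //.
have -> : lift m k = wd k by apply: val_inj; rewrite /= /bump leqNgt ltn_ord.
exact: ck.
Qed.
End Ded.

Import numFieldNormedType.Exports.

Section H.
Variable R : realType.

Lemma within_epsdelta (f : R -> R) (A : set R) x : {within A, continuous f} -> A x ->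
  forall e, 0 < e -> exists2 dl, 0 < dl & forall y, A y -> `|x - y| < dl -> `|f x - f y| < e.
Proof.
move=> cf Ax e e0.
have : f @ within A (nbhs x) --> f x.
  rewrite nbhs_subspace_in //; exact: cf.
move=> /cvgrPdist_lt /(_ e e0).
rewrite /within /= => /nbhs_ballP [dl dl0 H].
exists dl => // y Ay xy; apply: H => //.
Qed.

Lemma heine (f : R -> R) a b : {within `[a, b], continuous f} ->
  forall e, 0 < e -> exists2 dl, 0 < dl & forall u v, a <= u <= b -> a <= v <= b ->
    `|u - v| < dl -> `|f u - f v| < e.
Proof.
move=> cf e e0.
have K : compact `[a, b] := @segment_compact R a b.
move/compact_near_coveringP/near_covering_withinP: K => K.
have e2 : 0 < e / 2 by rewrite divr_gt0.
have cov : \forall dl \near (0:R)^'+, `[a, b]%classic `<=`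
    (fun x => forall y, y \in `[a, b] -> `|x - y| < dl -> `|f x - f y| < e).
  apply: K => x abx.
  have [eta eta0 Heta] := within_epsdelta cf abx e2.
  have eta2 : 0 < eta / 2 by rewrite divr_gt0.
  near=> x' dl => Kx' y yab hy.
  have hx : `|x - x'| < eta / 2 by near: x'; apply/nbhs_ballP; exists (eta / 2) => //= z; rewrite -ball_normE.
  have hdl : dl < eta / 2 by near: dl; apply: nbhs_right_lt.
  have hee : eta / 2 < eta by lra.
  have h1 := Heta x' Kx' (lt_trans hx hee).
  have hxy : `|x - y| < eta.
    have -> : x - y = (x - x') + (x' - y) by ring.
    apply: le_lt_trans (ler_normD _ _) _.
    have -> : eta = eta / 2 + eta / 2 by field.
    by apply: ltrD => //; apply: lt_trans hy hdl.
  have h2 := Heta y yab hxy.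
  have -> : f x' - f y = - (f x - f x') + (f x - f y) by ring.
  apply: le_lt_trans (ler_normD _ _) _.
  by rewrite normrN [e]splitr; apply: ltrD.
move: cov; rewrite /within => /nbhs_ballP [r r0 Hr].
exists (r / 2); first by apply: divr_gt0; [exact: r0|].
move=> u v hu hv huv; apply: (Hr (r / 2)) => //.
- by rewrite -ball_normE /ball_ /= sub0r normrN gtr0_norm ?divr_gt0 // ltr_pdivrMr // ltr_pMr // ltr1n.
- by apply: divr_gt0; [exact: r0|].
Unshelve. all: by end_near. Qed.

End H.

Section Final.
Variable R : realType.
Variable d : nat.

Definition shw (u v : seq 'I_d) : seq (seq 'I_d) := map rev (rsh (rev u) (rev v)).

Lemma sig_char (gamma : 'I_d -> R -> R) s t : s < t -> cont_BV_path gamma s t ->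
  is_char shw [::] (signature gamma s t).
Proof.
move=> st cb.
have bv i : bounded_variation s t (gamma i) by case: (cb i).
have ct i : {within `[s, t], continuous (gamma i)} by case: (cb i).
pose V := fun u => \sum_(i < d) fine (total_variation s u (gamma i)).
have dV i : dom (gamma i) V s t.
  move=> u v su uv vt.
  rewrite /V -sumrB (bigD1 i) //=.
  apply: le_trans (tv_dom (bv i) su uv vt) _.
  rewrite lerDl; apply: sumr_ge0 => k _.
  exact: le_trans (normr_ge0 _) (tv_dom (bv k) su uv vt).
have UCV : UC V s t.
  apply: UC_sum => i.
  exact: (heine (total_variation_continuous st (ct i) (bv i))).
split; first by [].
move=> u v; rewrite /signature.
rewrite (shuffle_id st UCV dV) ?lexx ?(ltW st) //.
by rewrite /shw big_map; apply: eq_bigr => w _; rewrite revK.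
Qed.

End Final.

Theorem mainTheorem16 (R : realType) (d n : nat)
    (X : 'I_n -> tensor_series R d) (c : 'I_n -> R) :
  injective X ->
  (forall j, @signatures R d (X j)) ->
  (forall w : seq 'I_d, \sum_(j < n) c j * X j w = 0) ->
  forall j, c j = 0.
Proof.
move=> injX sigX rel.
have chars : forall j, is_char (@shw d) (R := R) [::] (X j).
  move=> j; have [gamma [s [t [st cb ->]]]] := sigX j.
  exact: sig_char.
exact: (dedekind injX chars rel).
Qed.
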